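(* Let $\mu$ be a nonzero finite Borel measure on $\mathbb{T}$, and let $\Gamma_1,\Gamma_2,\dots$ be subsets of $\mathbb{T}$ such that each $\Gamma_n$ is a union of intervals of level $n$ (these intervals are called marked). Suppose there is $K>0$ such that for every positive integer $n$ and every interval $I$ of level $n$, $$\mu(I\cap\Gamma_{n+1})\ \ge\ K\,\mu(I).$$ Then for $\mu$-a.e. $x\in\mathbb{T}$ the following holds: for every positive integer $d$ there exists $n\ge 0$ such that the balls $B_{n+1}(x),B_{n+2}(x),\dots,B_{n+d}(x)$ are all marked, i.e. $B_{n+k}(x)\subseteq\Gamma_{n+k}$ for $k=1,\dots,d$.
   Context: Fix an integer $m\ge 2$ and let $\mathbb{T}=\{0,1,\dots,m-1\}^{\mathbb{N}}$ be the set of infinite sequences with entries in $\{0,\dots,m-1\}$, with metric $d(a,b)=m^{-n(a,b)+1}$ where $n(a,b)$ is the first index at which distinct $a,b$ differ. For an integer $n\ge0$ and $x\in\mathbb{T}$, $B_n(x)=B(x,m^{-n})$ is the set of sequences agreeing with $x$ in the first $n$ positions; these sets are the intervals of level $n$, and the intervals of level $n$ partition $\mathbb{T}$. *)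

(* Defs.v *)
From HB Require Import structures.
From mathcomp Require Import all_boot all_order all_algebra.
From mathcomp Require Import all_classical all_reals all_analysis.
Set Implicit Arguments. Unset Strict Implicit. Unset Printing Implicit Defensive.
Import Order.TTheory GRing.Theory Num.Theory.
Local Open Scope classical_set_scope.

(* The sequence space T = {0,..,m-1}^N with the product of discrete
   topologies (= the topology of the metric d(a,b) = m^{-n(a,b)+1}). *)
(* The measure-theory library requires a
   pointed (inhabited) carrier, so -- exactly as MathComp's 'Z_m -- we use
   'I_(m.-2.+2), which is 'I_m whenever m >= 2 (the standing assumption,
   which is also a hypothesis of the theorem). *)
Definition alph (m : nat) : Type := 'I_(m.-2.+2).
HB.instance Definition _ m := Finite.on (alph m).
HB.instance Definition _ m := isPointed.Build (alph m) ord0.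

Definition seqspace (m : nat) : Type :=
  prod_topology (fun _ : nat => discrete_topology (alph m)).

Notation borelT m := (g_sigma_algebraType (@open (seqspace m))).

(* B_n(x): sequences agreeing with x in the first n positions
   (the interval of level n containing x). *)
Definition Bn (m n : nat) (x : borelT m) : set (borelT m) :=
  [set y | forall i, (i < n)%N -> y i = x i].

Definition interval_of_level (m n : nat) (I : set (borelT m)) : Prop :=
  exists x, I = Bn n x.

Definition union_of_level (m n : nat) (G : set (borelT m)) : Prop :=
  exists S : set (borelT m), G = \bigcup_(x in S) Bn n x.

(* Main.v *)
Require Import Defs.
From HB Require Import structures.
From mathcomp Require Import all_boot all_order all_algebra.
From mathcomp Require Import all_classical all_reals all_analysis.
Import Order.TTheory GRing.Theory Num.Theory.
Local Open Scope classical_set_scope.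
Local Open Scope ring_scope.

Section S.
Variable m : nat.
Local Notation T := (borelT m).

Lemma open_coord (i : nat) (a : alph m) :
  open ([set y : seqspace m | y i = a]).
Proof.
have -> : [set y : seqspace m | y i = a] = (@proj nat (fun _ => discrete_topology (alph m)) i) @^-1` [set a] by [].
apply: open_comp; [move=> + _; exact: proj_continuous| apply: discrete_open].
Qed.

Lemma open_meas (A : set T) : open (A : set (seqspace m)) -> measurable A.
Proof. move=> oA; exact: sub_gen_smallest. Qed.

Lemma Bn_open n (x : T) : open (Bn n x : set (seqspace m)).
Proof.
elim: n => [|n IH].
  have -> : Bn 0 x = setT by apply/seteqP; split => y //.
  exact: openT.
have -> : Bn n.+1 x = Bn n x `&` [set y : seqspace m | y n = x n].
  apply/seteqP; split => y /=.
    move=> H; split; first by move=> i hi; apply: H; rewrite ltnS ltnW.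
    by apply: H.
  move=> [H1 H2] i; rewrite ltnS leq_eqVlt => /orP[/eqP->//|]; exact: H1.
by apply: openI => //; apply: open_coord.
Qed.
Definition pref N (y : T) : {ffun 'I_N -> alph m} := [ffun i : 'I_N => y i].
Definition cyl N (p : {ffun 'I_N -> alph m}) : set T := [set y | pref N y = p].
Arguments cyl {N}.

Lemma BnE N (x y : T) : Bn N x y <-> pref N y = pref N x.
Proof.
split => [H|H].
  by apply/ffunP => i; rewrite !ffunE; apply: H.
move=> i hi; have := congr1 (fun f : {ffun 'I_N -> alph m} => f (Ordinal hi)) H; by rewrite !ffunE.
Qed.

Lemma Bn_meas N (x : T) : measurable (Bn N x).
Proof. apply: open_meas; exact: Bn_open. Qed.

Lemma cyl_meas N (p : {ffun 'I_N -> alph m}) : measurable (cyl p : set T).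
Proof.
have [[y hy]|h] := pselect (exists y, @cyl N p y).
  have -> : cyl p = Bn N y.
    apply/seteqP; split => z /=; rewrite BnE /cyl /= hy //.
  exact: Bn_meas.
have -> : cyl p = set0 by apply/seteqP; split => z // hz; apply: h; exists z.
exact: measurable0.
Qed.

Lemma in_bigsetU n (F : 'I_n -> set T) (y : T) :
  (\big[setU/set0]_(i < n) F i) y <-> exists i, F i y.
Proof.
split.
  elim/big_rec: _ => [//|i A _ IH [H|H]]; [by exists i|exact: IH].
move=> [i Hi]; rewrite (bigD1 i) //=; by left.
Qed.

Variable R : realType.
Variable mu : {finite_measure set T -> \bar R}.

Local Notation P N := {ffun 'I_N -> alph m}.

Lemma decomp N (X : set T) : measurable X ->
  mu X = (\sum_(i < #|{:P N}|) mu (X `&` cyl (enum_val i)))%E.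
Proof.
move=> mX.
have E : X = \big[setU/set0]_(i < #|{:P N}|) (X `&` cyl (enum_val i)).
  apply/seteqP; split => y.
    move=> Xy; apply/in_bigsetU; exists (enum_rank (pref N y)).
    by split => //; rewrite /cyl /= enum_rankK.
  by move=> /in_bigsetU [i [? _]].
rewrite {1}E measure_semi_additive_ord //.
- by move=> k; apply: measurableI => //; exact: cyl_meas.
- apply/trivIsetP => i j _ _ ij; apply/seteqP; split => y // [[_ h1] [_ h2]].
  by move/negP: ij; apply; apply/eqP; apply: enum_val_inj; rewrite -h1 -h2.
- by rewrite -E.
Qed.
Definition sat N (S : set T) := forall x y, S x -> Bn N x y -> S y.

Lemma local_lower N (S X : set T) (c : R) : 0 <= c -> measurable S ->
  measurable X -> sat N S ->
  (forall x, (c%:E * mu (Bn N x) <= mu (Bn N x `&` X))%E) ->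
  (c%:E * mu S <= mu (S `&` X))%E.
Proof.
move=> c0 mS mX sS H.
rewrite (@decomp N S mS) (@decomp N (S `&` X) (measurableI _ _ mS mX)).
rewrite ge0_sume_distrr; last by move=> i _; apply: measure_ge0.
apply: lee_sum => i _; set p := enum_val i.
have [[y [Sy hy]]|h] := pselect (exists y, S y /\ cyl p y).
  have E : cyl p = Bn N y.
    by apply/seteqP; split => z /=; rewrite BnE /cyl /= hy.
  have -> : S `&` cyl p = Bn N y.
    rewrite E; apply/seteqP; split => z; first by case.
    by move=> hz; split => //; apply: sS hz.
  have -> : S `&` X `&` cyl p = Bn N y `&` X.
    rewrite E; apply/seteqP; split => z; first by case=> -[].
    by move=> [hz xz]; split => //; split => //; apply: sS hz.
  exact: H.
have -> : S `&` cyl p = set0.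
  by apply/seteqP; split => z // [? ?]; apply: h; exists z.
rewrite measure0 mule0; exact: measure_ge0.
Qed.
Lemma sat_mono N M (S : set T) : (N <= M)%N -> sat N S -> sat M S.
Proof. move=> NM sS x y Sx Bxy; apply: (sS x) => // i hi; apply: Bxy; exact: leq_trans hi NM. Qed.

Lemma satI N (S1 S2 : set T) : sat N S1 -> sat N S2 -> sat N (S1 `&` S2).
Proof. move=> h1 h2 x y [? ?] B; split; [exact: (h1 x)|exact: (h2 x)]. Qed.

Lemma satT N : sat N (setT : set T). Proof. by []. Qed.

Lemma satC N (S : set T) : sat N S -> sat N (~` S).
Proof.
move=> h x y nSx Bxy Sy; apply: nSx; apply: (h y) => // i hi.
by rewrite (Bxy i hi).
Qed.

Variable Gamma : nat -> set T.
Variable c : R.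
Hypothesis c0 : 0 <= c.
Hypothesis Gsat : forall n, (0 < n)%N -> sat n (Gamma n).
Hypothesis Gmeas : forall n, (0 < n)%N -> measurable (Gamma n).
Hypothesis Gmass : forall n, (0 < n)%N -> forall x,
  (c%:E * mu (Bn n x) <= mu (Bn n x `&` Gamma n.+1))%E.

Fixpoint Ablk N d : set T :=
  if d is d'.+1 then Ablk N d' `&` Gamma (N + d'.+1) else setT.

Lemma Ablk_meas N d : measurable (Ablk N d).
Proof.
elim: d => [|d IH] /=; first exact: measurableT.
apply: measurableI => //; apply: Gmeas; by rewrite addnS.
Qed.

Lemma Ablk_sat N d : sat (N + d) (Ablk N d).
Proof.
elim: d => [|d IH] /=; first exact: satT.
apply: satI.
  by apply: sat_mono IH; rewrite addnS.
by apply: Gsat; rewrite addnS.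
Qed.

Lemma Ablk_in N d x : Ablk N d x -> forall k, (1 <= k <= d)%N -> Gamma (N + k) x.
Proof.
elim: d => [|d IH] /=; first by move=> _ k /andP[h1 h2]; move: (leq_trans h1 h2).
move=> [Ax Gx] k /andP[k1]; rewrite leq_eqVlt => /orP[/eqP->//|kd].
apply: IH => //; by rewrite k1.
Qed.

Lemma Ablk_mass N d (S : set T) : (0 < N)%N -> measurable S -> sat N S ->
  ((c ^+ d)%:E * mu S <= mu (S `&` Ablk N d))%E.
Proof.
move=> N0 mS sS; elim: d => [|d IH] /=.
  by rewrite expr0 mul1e setIT.
rewrite setIA exprS EFinM -muleA.
apply: le_trans (_ : (c%:E * mu (S `&` Ablk N d) <= _)%E).
  apply: lee_wpmul2l => //; by rewrite lee_fin.
apply: (@local_lower (N + d)) => //.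
- by apply: measurableI => //; exact: Ablk_meas.
- by apply: Gmeas; rewrite addnS.
- apply: satI; [apply: sat_mono sS|exact: Ablk_sat]; by rewrite leq_addr.
- move=> x; rewrite addnS; apply: Gmass; by rewrite addn_gt0 N0.
Qed.
Lemma geo0 (q M a : R) : 0 <= q < 1 ->
  (forall J, a <= M * q ^+ J) -> a <= 0.
Proof.
move=> /andP[q0 q1] H; rewrite leNgt; apply/negP => a0.
have hq : `|q| < 1 by rewrite ger0_norm.
have := cvgr_lt _ (cvg_geometric M hq) _ a0.
move=> [N _ HN].
have := HN N (leqnn N) => /=.
by rewrite ltNge H.
Qed.

Definition r (X : set T) : R := fine (mu X).
Lemma rE X : measurable X -> mu X = (r X)%:E.
Proof. by move=> mX; rewrite /r fineK //; exact: fin_num_measure. Qed.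
Arguments rE {X}.

Fixpoint Fseq d J : set T :=
  if J is J'.+1 then Fseq d J' `&` ~` Ablk (J * d) d else setT.

Lemma Fseq_meas d J : measurable (Fseq d J).
Proof.
elim: J => [|J IH] /=; first exact: measurableT.
apply: measurableI => //; apply: measurableC; exact: Ablk_meas.
Qed.

Lemma Fseq_sat d J : sat (J.+1 * d) (Fseq d J).
Proof.
elim: J => [|J IH] /=; first exact: satT.
apply: satI.
  by apply: sat_mono IH; rewrite leq_mul2r leqnSn orbT.
by apply: satC; rewrite [in X in sat X _]mulSnr; exact: Ablk_sat.
Qed.

Lemma Fseq_mass d J : (0 < d)%N -> c ^+ d <= 1 ->
  r (Fseq d J) <= (1 - c ^+ d) ^+ J * r setT.
Proof.
move=> d0 cd1; elim: J => [|J IH] /=; first by rewrite expr0 mul1r.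
set F := Fseq d J; set A := Ablk (J.+1 * d) d.
have mF : measurable F by exact: Fseq_meas.
have mA : measurable A by exact: Ablk_meas.
have H1 : (r F)%:E = (r (F `\` A) + r (F `&` A))%:E.
  rewrite EFinD -(rE mF) -(rE (measurableD mF mA)) -(rE (measurableI _ _ mF mA)).
  exact: measureDI.
have Jd : (0 < J.+1 * d)%N by rewrite muln_gt0 d0.
have H2 := @Ablk_mass (J.+1 * d) d F Jd mF (Fseq_sat d J).
rewrite -setDE.
rewrite (rE mF) (rE (measurableI _ _ mF mA)) in H2.
rewrite -EFinM lee_fin in H2; case: H1 => H1.
have -> : r (F `\` A) = r F - r (F `&` A) by rewrite H1 addrK.
rewrite exprS -mulrA.
apply: (@le_trans _ _ ((1 - c ^+ d) * r F)).
  by rewrite mulrBl mul1r lerD2l lerN2.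
by apply: ler_wpM2l => //; rewrite subr_ge0.
Qed.

Definition Pd d (x : T) := (0 < d)%N -> exists n : nat,
  forall k, (1 <= k <= d)%N -> Bn (n + k)%N x `<=` Gamma (n + k)%N.

Lemma ae_d d : 0 < c -> c <= 1 -> \forall x \ae mu, Pd d x.
Proof.
move=> cpos c1.
case: (posnP d) => [->|d0].
  by apply: aeW => x; rewrite /Pd ltnn.
have cd1 : c ^+ d <= 1 by rewrite exprn_ile1 // ltW.
set Nd := \bigcap_J Fseq d J.
have mN : measurable Nd by apply: bigcapT_measurable => k; exact: Fseq_meas.
exists Nd; split => //.
  rewrite (rE mN); congr EFin; apply/eqP; rewrite eq_le; apply/andP; split; last first.
    by rewrite /r fine_ge0 // measure_ge0.
  apply: (@geo0 (1 - c ^+ d) (r setT)).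
    rewrite subr_ge0 cd1 /= ltrBlDr ltrDl exprn_gt0 //.
  move=> J; rewrite mulrC; apply: (@le_trans _ _ (r (Fseq d J))); last first.
    exact: (Fseq_mass d J d0 cd1).
  rewrite -lee_fin -(rE mN) -(rE (Fseq_meas d J)).
  apply: le_measure; rewrite ?inE //; first exact: Fseq_meas.
  by move=> y; apply.
move=> x nPx J _; elim: J => [|J IH] //=; split => // hA.
apply: nPx => _; exists (J.+1 * d)%N => k hk y hy.
have hk0 : (0 < J.+1 * d + k)%N by rewrite addn_gt0 muln_gt0 d0.
exact: (Gsat _ hk0 x y (Ablk_in _ _ _ hA k hk) hy).
Qed.
End S.

Theorem lemma2 (R : realType) (m : nat) (hm : (2 <= m)%N)
  (mu : {finite_measure set (borelT m) -> \bar R})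
  (mu_nz : mu setT != 0%E)
  (Gamma : nat -> set (borelT m))
  (HG : forall n, (0 < n)%N -> union_of_level n (Gamma n))
  (K : R) (hK : 0 < K)
  (Hmass : forall n, (0 < n)%N -> forall I, interval_of_level n I ->
     (K%:E * mu I <= mu (I `&` Gamma n.+1))%E) :
  {ae mu, forall x, forall d, (0 < d)%N -> exists n : nat,
     forall k, (1 <= k <= d)%N -> Bn (n + k)%N x `<=` Gamma (n + k)%N}.
Proof.
set c := Num.min K 1.
have cpos : 0 < c by rewrite lt_min hK ltr01.
have c1 : c <= 1 by rewrite ge_min lexx orbT.
have Gsat : forall n, (0 < n)%N -> sat m n (Gamma n).
  move=> n hn; have [S ->] := HG n hn.
  move=> x y [s Ss hs] hy; exists s => // i hi.
  by rewrite (hy i hi) (hs i hi).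
have Gmeas : forall n, (0 < n)%N -> measurable (Gamma n).
  move=> n hn; have [S ->] := HG n hn.
  apply: open_meas; apply: bigcup_open => s _; exact: Bn_open.
have Gmass : forall n, (0 < n)%N -> forall x,
    (c%:E * mu (Bn n x) <= mu (Bn n x `&` Gamma n.+1))%E.
  move=> n hn x; apply: le_trans (Hmass n hn _ (ex_intro _ x erefl)).
  by apply: lee_wpmul2r => //; rewrite lee_fin ge_min lexx.
have H : forall d, \forall x \ae mu, Pd m Gamma d x.
  move=> d; exact: (@ae_d m R mu Gamma c (ltW cpos) Gsat Gmeas Gmass d cpos c1).
apply: filterS (ae_foralln H) => x Hx d; exact: Hx.
Qed.
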